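(* Let $A_t$, $t\in I$ ($I$ an interval), be a solution of the ODE $\dot A_t=A_t[A_t,A_t^*]$ in $\mathfrak{gl}_n(\mathbb C)$. Then $t\mapsto\|A_t\|^2=\mathrm{tr}(A_tA_t^* )$ is monotonically non-increasing, and $\frac{d}{dt}\|A_t\|^2=0$ at a time $t$ if and only if $A_t$ is normal.
   Context: $A^*$ denotes the conjugate transpose (adjoint with respect to the standard Hermitian inner product on $\mathbb C^n$), $[X,Y]=XY-YX$, and $\|A\|^2=\mathrm{tr}(AA^* )$. *)

(* Defs.v *)
From HB Require Import structures.
From mathcomp Require Import all_boot all_order all_algebra.
From mathcomp Require Import all_classical all_reals all_analysis.
From mathcomp Require Import complex.
Set Implicit Arguments. Unset Strict Implicit. Unset Printing Implicit Defensive.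
Import Order.TTheory GRing.Theory Num.Theory.
Import numFieldNormedType.Exports.
Local Open Scope ring_scope.
Local Open Scope classical_set_scope.

Definition adjmx (R : rcfType) (n : nat) (A : 'M[R[i]]_n) : 'M[R[i]]_n :=
  (map_mx (@conjc R) A)^T.

Definition lie (R : rcfType) (n : nat) (X Y : 'M[R[i]]_n) : 'M[R[i]]_n :=
  X *m Y - Y *m X.

(* ||A||^2 = tr(A A^H), a nonnegative real number; we take its real part
   (its imaginary part is 0) so that it is an R-valued function. *)
Definition normsq (R : rcfType) (n : nat) (A : 'M[R[i]]_n) : R :=
  complex.Re (\tr (A *m adjmx A)).

Definition is_normal (R : rcfType) (n : nat) (A : 'M[R[i]]_n) : Prop :=
  A *m adjmx A = adjmx A *m A.

(* A : R -> gl_n(C) is differentiable at t with derivative D, entrywise and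
   componentwise (real and imaginary parts), which is the usual derivative
   of a function R -> C^{n x n} = R^{2 n^2}. *)
Definition mx_has_deriv (R : realType) (n : nat) (A : R -> 'M[R[i]]_n)
    (t : R) (D : 'M[R[i]]_n) : Prop :=
  forall i j : 'I_n,
    is_derive t (1 : R) (fun s => complex.Re (A s i j)) (complex.Re (D i j)) /\
    is_derive t (1 : R) (fun s => complex.Im (A s i j)) (complex.Im (D i j)).

Definition mx_continuous_within (R : realType) (n : nat) (I : set R)
    (A : R -> 'M[R[i]]_n) : Prop :=
  forall i j : 'I_n,
    {within I, continuous (fun s => complex.Re (A s i j))} /\
    {within I, continuous (fun s => complex.Im (A s i j))}.

(* Main.v *)
Require Import Defs.
From HB Require Import structures.
From mathcomp Require Import all_boot all_order all_algebra.
From mathcomp Require Import all_classical all_reals all_analysis.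
From mathcomp Require Import complex ring.
Import Order.TTheory GRing.Theory Num.Theory.
Import numFieldNormedType.Exports.
Local Open Scope ring_scope.
Local Open Scope classical_set_scope.
Set Implicit Arguments. Unset Strict Implicit.

Lemma Re_sum (R : rcfType) n (F : 'I_n -> R[i]) : complex.Re (\sum_(i < n) F i) = \sum_(i < n) complex.Re (F i).
Proof. elim/big_rec2: _ => // i y1 y2 _ <-. by case: (F i) => a b; case: y2 => c d. Qed.
Lemma Im_sum (R : rcfType) n (F : 'I_n -> R[i]) : complex.Im (\sum_(i < n) F i) = \sum_(i < n) complex.Im (F i).
Proof. elim/big_rec2: _ => // i y1 y2 _ <-. by case: (F i) => a b; case: y2 => c d. Qed.
Lemma ReMJ (R : rcfType) (z w : R[i]) : complex.Re (z * conjc w) = complex.Re z * complex.Re w + complex.Im z * complex.Im w.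
Proof. case: z => a b; case: w => c d /=. by rewrite mulrN opprK. Qed.

Lemma Re_tr_adj (R : rcfType) n (X Y : 'M[R[i]]_n) :
  complex.Re (\tr (X *m adjmx Y)) = \sum_i \sum_j (complex.Re (X i j) * complex.Re (Y i j) + complex.Im (X i j) * complex.Im (Y i j)).
Proof.
rewrite /mxtrace Re_sum; apply: eq_bigr => i _; rewrite mxE Re_sum.
by apply: eq_bigr => j _; rewrite /adjmx !mxE ReMJ.
Qed.

Lemma tr_id (R : comRingType) n (M N : 'M[R]_n) :
  \tr (M *m (M *m N - N *m M) *m N) *+ 2 = - \tr ((M *m N - N *m M) *m (M *m N - N *m M)).
Proof.
have tr4 (a b c d : 'M[R]_n) : \tr (a *m b *m c *m d) = \tr (b *m c *m d *m a).
  by rewrite -!mulmxA mxtrace_mulC !mulmxA.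
have trN (X : 'M[R]_n) : \tr (- X) = - \tr X.
  by rewrite /mxtrace -sumrN; apply eq_bigr => i _; rewrite mxE.
rewrite mulmxBr mulmxBl !mulmxBl !mulmxBr !mxtraceD !trN !mxtraceD !trN !mulmxA.
rewrite -(tr4 M M N N) (tr4 N M M N) (tr4 N M N M).
rewrite mulr2n. ring.
Qed.
Lemma adjmxM (R : rcfType) n (X Y : 'M[R[i]]_n) : adjmx (X *m Y) = adjmx Y *m adjmx X.
Proof. by rewrite /adjmx map_mxM trmx_mul. Qed.
Lemma adjmxK (R : rcfType) n (X : 'M[R[i]]_n) : adjmx (adjmx X) = X.
Proof. by apply/matrixP => i j; rewrite /adjmx !mxE conjcK. Qed.
Lemma adjmxB (R : rcfType) n (X Y : 'M[R[i]]_n) : adjmx (X - Y) = adjmx X - adjmx Y.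
Proof. by apply/matrixP => i j; rewrite /adjmx !mxE rmorphB. Qed.
Lemma lie_herm (R : rcfType) n (X : 'M[R[i]]_n) :
  adjmx (lie X (adjmx X)) = lie X (adjmx X).
Proof. by rewrite /lie adjmxB !adjmxM adjmxK. Qed.
Lemma normsq_sum (R : rcfType) n (X : 'M[R[i]]_n) :
  normsq X = \sum_i \sum_j (complex.Re (X i j) ^+ 2 + complex.Im (X i j) ^+ 2).
Proof. by rewrite /normsq Re_tr_adj; apply eq_bigr => i _; apply eq_bigr => j _; rewrite !expr2. Qed.
Lemma normsq_ge0 (R : rcfType) n (X : 'M[R[i]]_n) : 0 <= normsq X.
Proof. by rewrite normsq_sum; do 2 (apply: sumr_ge0 => ? _); rewrite addr_ge0 // sqr_ge0. Qed.
Lemma normsq_eq0 (R : rcfType) n (X : 'M[R[i]]_n) : normsq X = 0 -> X = 0.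
Proof.
have h1 (a b : R) : 0 <= a ^+ 2 + b ^+ 2 by rewrite addr_ge0 // sqr_ge0.
rewrite normsq_sum => /psumr_eq0P H; apply/matrixP => i j; rewrite mxE.
have /psumr_eq0P H2 := H (fun k _ => sumr_ge0 _ (fun l _ => h1 _ _)) i isT.
have := H2 (fun l _ => h1 _ _) j isT.
move: (X i j) => [a b] /= /eqP; rewrite paddr_eq0 ?sqr_ge0 // !sqrf_eq0 => /andP[/eqP -> /eqP ->].
by [].
Qed.
Lemma is_derive_sum2 (R : realType) n (F : 'I_n -> 'I_n -> R -> R) (dF : 'I_n -> 'I_n -> R) (t : R) :
  (forall i j, is_derive t 1 (F i j) (dF i j)) ->
  is_derive t 1 (fun s => \sum_i \sum_j F i j s) (\sum_i \sum_j dF i j).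
Proof.
move=> H.
have -> : (fun s => \sum_i \sum_j F i j s) = \sum_i \sum_j F i j.
  apply/funext => s; rewrite fct_sumE; apply: eq_bigr => i _; by rewrite fct_sumE.
by apply: is_derive_sum => i; apply: is_derive_sum => j; exact: H.
Qed.

Lemma is_derive_sq2 (R : realType) (f g : R -> R) (t df dg : R) :
  is_derive t 1 f df -> is_derive t 1 g dg ->
  is_derive t 1 (fun s => f s ^+ 2 + g s ^+ 2) ((f t * df + g t * dg) *+ 2).
Proof.
move=> hf hg.
have := is_deriveD (is_deriveX 2 hf) (is_deriveX 2 hg).
have -> : (fun s => f s ^+ 2 + g s ^+ 2) = f ^+ 2 + g ^+ 2 by rewrite !exprfctE.
move=> h; apply: (is_derive_eq h).
by rewrite !expr1 -!scalerA -scalerDr scaler_nat.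
Qed.
Lemma normsq_is_derive (R : realType) n (A : R -> 'M[R[i]]_n) (t : R) D :
  mx_has_deriv A t D ->
  is_derive t 1 (fun s => normsq (A s)) ((complex.Re (\tr (D *m adjmx (A t)))) *+ 2).
Proof.
move=> H.
have -> : (fun s => normsq (A s)) = fun s => \sum_i \sum_j (complex.Re (A s i j) ^+ 2 + complex.Im (A s i j) ^+ 2).
  by apply/funext => s; rewrite normsq_sum.
apply: is_derive_eq.
  apply: (is_derive_sum2 (F := fun i j s => complex.Re (A s i j) ^+ 2 + complex.Im (A s i j) ^+ 2)) => i j.
  exact: (is_derive_sq2 (H i j).1 (H i j).2).
rewrite Re_tr_adj -sumrMnl; apply: eq_bigr => i _; rewrite -sumrMnl; apply: eq_bigr => j _.
by rewrite (mulrC (complex.Re (A t i j))) (mulrC (complex.Im (A t i j))).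
Qed.
Lemma ReD (R : rcfType) (x y : R[i]) : complex.Re (x + y) = complex.Re x + complex.Re y.
Proof. by case: x => a b; case: y. Qed.
Lemma ReN (R : rcfType) (x : R[i]) : complex.Re (- x) = - complex.Re x.
Proof. by case: x. Qed.

Lemma deriv_value (R : rcfType) n (X : 'M[R[i]]_n) :
  complex.Re (\tr ((X *m lie X (adjmx X)) *m adjmx X)) *+ 2 = - normsq (lie X (adjmx X)).
Proof.
rewrite mulr2n -ReD -mulr2n tr_id ReN /normsq; congr (- complex.Re (\tr (_ *m _))).
by rewrite -/(lie X (adjmx X)) lie_herm.
Qed.
Lemma cont_sum2 (T : topologicalType) (R : realType) n (F : 'I_n -> 'I_n -> T -> R) :
  (forall i j, continuous (F i j)) -> continuous (fun s => \sum_i \sum_j F i j s).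
Proof.
move=> H.
have -> : (fun s => \sum_i \sum_j F i j s) = \sum_i \sum_j F i j.
  apply/funext => s; rewrite fct_sumE; apply: eq_bigr => i _; by rewrite fct_sumE.
elim/big_ind: _ => [x|f g cf cg x|i _]; first exact: cst_continuous.
  exact: continuousD (cf x) (cg x).
elim/big_ind: _ => [x|f g cf cg x|j _]; first exact: cst_continuous.
  exact: continuousD (cf x) (cg x).
exact: H.
Qed.

Lemma normsq_cont (R : realType) n (I : set R) (A : R -> 'M[R[i]]_n) :
  mx_continuous_within I A -> {within I, continuous (fun s => normsq (A s))}.
Proof.
move=> H.
have -> : (fun s => normsq (A s)) = fun s => \sum_i \sum_j (complex.Re (A s i j) * complex.Re (A s i j) + complex.Im (A s i j) * complex.Im (A s i j)).
  by apply/funext => s; rewrite /normsq Re_tr_adj.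
apply: (@cont_sum2 (subspace I) R n (fun i j s => complex.Re (A s i j) * complex.Re (A s i j) + complex.Im (A s i j) * complex.Im (A s i j))) => i j x.
have h1 := continuousM ((H i j).1 x) ((H i j).1 x).
have h2 := continuousM ((H i j).2 x) ((H i j).2 x).
exact: (continuousD h1 h2).
Qed.

Unset Implicit Arguments.

Theorem proposition4p4 (R : realType) (n : nat) (I : set R)
    (A : R -> 'M[R[i]]_n) :
  is_interval I ->
  mx_continuous_within I A ->
  (forall t : R, I° t -> mx_has_deriv A t (A t *m lie (A t) (adjmx (A t)))) ->
  (forall s t, I s -> I t -> s <= t -> normsq (A t) <= normsq (A s)) /\
  (forall t : R, I° t ->
     derivable (fun s => normsq (A s)) t 1 /\
     ((fun s => normsq (A s))^`() t = 0 <-> is_normal (A t))).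
Proof.
move=> Iint Acont Ader.
have Dt t : I° t -> is_derive t 1 (fun s => normsq (A s)) (- normsq (lie (A t) (adjmx (A t)))).
  move=> It; rewrite -deriv_value; exact: normsq_is_derive (Ader t It).
have D1 t : I° t -> (fun s => normsq (A s))^`() t = - normsq (lie (A t) (adjmx (A t))).
  by move=> It; rewrite derive1E; have := Dt t It => ?; rewrite derive_val.
split; last first.
  move=> t It; split; first by have := Dt t It => ?; exact: ex_derive.
  rewrite D1 //; split.
    move/eqP; rewrite oppr_eq0 => /eqP /normsq_eq0; rewrite /lie => /eqP.
    by rewrite subr_eq0 => /eqP.
  rewrite /is_normal /lie => ->; rewrite subrr.
  by rewrite /normsq mul0mx mxtrace0 oppr0.
move=> s t Is It st.
have sub : `[s, t] `<=` I.
  by move=> x /=; rewrite in_itv /= => /andP[sx xt]; apply: (Iint s t); rewrite // sx xt.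
have subo : forall x, x \in `]s, t[%R -> I° x.
  move=> x xo; apply: (interiorS sub).
  have E := @interior_itv_bnd R s t true false.
  rewrite E. exact: xo.
apply: (@ler0_derive1_le_cc R (fun s => normsq (A s)) s t).
- move=> x /subo Ix; have := Dt x Ix => ?; exact: ex_derive.
- by move=> x /subo Ix; rewrite D1 // oppr_le0 normsq_ge0.
- exact: (continuous_subspaceW sub (normsq_cont Acont)).
- by rewrite in_itv /= lexx st.
- by rewrite in_itv /= lexx st.
- exact: st.
Qed.
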